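(* Fix $M>0$ and consider the following repeated game (Protocol 2) between nature, a forecaster and agents, for $t=1,2,\dots$: (1) nature reveals $x_t\in\mathcal{X}$ and chooses $\mu_t^*\in[0,1]$ without revealing it; (2) the forecaster reveals $\mu_t,c_t$; (3) agent $t$, with loss function $l_t:\mathcal{A}\times\{0,1\}\to\mathbb{R}$, reveals an action $a_t\in\mathcal{A}$ and a stake $b_t\in[-M,M]$; (4) nature samples $y_t\sim\mathrm{Bernoulli}(\mu_t^* )$ and reveals $y_t$; (5) the agent incurs loss $l_t(a_t,y_t)-b_t(y_t-\mu_t)+|b_t|c_t$ and the forecaster incurs loss $b_t(y_t-\mu_t)-|b_t|c_t$. Each player's choice at time $t$ may depend arbitrarily on everything revealed before it, but not on future quantities. Suppose additionally that $b_t\ge 0$ for all $t$. Then there exists an algorithm for the forecaster that outputs $\mu_t$ with $c_t\equiv 0$ and is asymptotically exact for $\mu_t^*,b_t$ generated by any strategy of nature and agents, i.e. $$\limsup_{T\to\infty}\frac1T\sum_{t=1}^T b_t(\mu_t-y_t)=0.$$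
   Context: A sequence of forecasts $(\mu_t,c_t)$ is called asymptotically exact relative to $y_1,b_1,y_2,b_2,\dots$ if $\limsup_{T\to\infty}\frac1T\sum_{t=1}^T b_t(\mu_t-y_t)-|b_t|c_t=0$. *)

(* Defs.v *)
From Stdlib Require Import Reals List.
From Coquelicot Require Import Coquelicot.
Import ListNotations.
Open Scope R_scope.

(* psum f T = f 0 + ... + f (T-1)   (times are 0-indexed: index t <-> paper time t+1) *)
Fixpoint psum (f : nat -> R) (T : nat) : R :=
  match T with
  | O => 0
  | S n => psum f n + f n
  end.

(* (mu_t, c_t) asymptotically exact relative to y_1,b_1,y_2,b_2,... :
   limsup_{T -> oo} (1/T) sum_{t=1}^T ( b_t (mu_t - y_t) - |b_t| c_t ) = 0.
   The averaged sequence is indexed by T-1 (i.e. n |-> average over n+1 rounds),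
   which does not change the limsup and avoids division by 0. *)
Definition asymptotically_exact (mu c y b : nat -> R) : Prop :=
  LimSup_seq (fun n => psum (fun t => b t * (mu t - y t) - Rabs (b t) * c t) (S n)
                        / INR (S n)) = Finite 0.

(* The current x_t is passed
   separately.  (The forecaster's own past outputs are recomputable from this.) *)
Definition history {X A : Type} (x : nat -> X) (a : nat -> A) (b y : nat -> R)
  (t : nat) : list (X * A * R * R) :=
  map (fun s => (x s, a s, b s, y s)) (seq 0 t).

(* A deterministic forecasting algorithm outputting mu_t (with c_t = 0). *)
Definition forecaster (X A : Type) := list (X * A * R * R) -> X -> R.

Definition run_forecaster {X A : Type} (F : forecaster X A)
  (x : nat -> X) (a : nat -> A) (b y : nat -> R) : nat -> R :=
  fun t => F (history x a b y t) (x t).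

(* Main.v *)
Require Import Defs.
From Stdlib Require Import Reals List Lra Lia.
From Coquelicot Require Import Coquelicot.
Import ListNotations.
Open Scope R_scope.

Definition pred_of (S : R) : R := if Rle_dec S 0 then 1 else 0.

Definition stepS {X A : Type} (S : R) (e : X * A * R * R) : R :=
  let '(_, _, bb, yy) := e in S + bb * (pred_of S - yy).

Definition Sof {X A : Type} (h : list (X * A * R * R)) : R := fold_left stepS h 0.

Definition Fc (X A : Type) : forecaster X A := fun h _ => pred_of (Sof h).

Lemma history_S {X A : Type} (x : nat -> X) (a : nat -> A) b y t :
  history x a b y (S t) = history x a b y t ++ [(x t, a t, b t, y t)].
Proof. unfold history. rewrite seq_S, map_app. reflexivity. Qed.

Lemma psum_Sof {X A : Type} (x : nat -> X) (a : nat -> A) b y t :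
  psum (fun t => b t * (run_forecaster (Fc X A) x a b y t - y t) - Rabs (b t) * 0) t
  = Sof (history x a b y t).
Proof.
  induction t as [|t IH]; [reflexivity|].
  simpl psum. rewrite IH. unfold Sof. rewrite history_S, fold_left_app. simpl.
  unfold run_forecaster, Fc, Sof. ring.
Qed.

Lemma Sof_bound {X A : Type} (x : nat -> X) (a : nat -> A) b y M :
  (forall t, 0 <= b t <= M) -> (forall t, y t = 0 \/ y t = 1) ->
  forall t, Rabs (Sof (history x a b y t)) <= M.
Proof.
  intros Hb Hy t. assert (0 <= M) by (destruct (Hb 0%nat); lra).
  induction t as [|t IH].
  - unfold Sof; simpl. rewrite Rabs_R0. lra.
  - unfold Sof in *. rewrite history_S, fold_left_app. simpl.
    set (s := fold_left stepS (history x a b y t) 0) in *.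
    apply Rabs_le. apply Rabs_le_between in IH.
    specialize (Hb t). unfold pred_of.
    destruct (Rle_dec s 0); destruct (Hy t) as [e|e]; rewrite e; nra.
Qed.

Theorem corollary1 :
  forall (X A : Type) (M : R), 0 < M ->
  exists F : forecaster X A,
    (forall h xt, 0 <= F h xt <= 1) /\
    forall (x : nat -> X) (a : nat -> A) (b y : nat -> R),
      (forall t, - M <= b t <= M) ->
      (forall t, 0 <= b t) ->
      (forall t, y t = 0 \/ y t = 1) ->
      asymptotically_exact (run_forecaster F x a b y) (fun _ => 0) y b.
Proof.
  intros X A M HM. exists (Fc X A). split.
  - intros h xt. unfold Fc, pred_of. destruct (Rle_dec _ _); lra.
  - intros x a b y Hb Hb0 Hy. unfold asymptotically_exact.
    apply is_LimSup_seq_unique, is_lim_LimSup_seq.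
    assert (Hlim : is_lim_seq (fun n => M * / INR (S n)) 0).
    { replace (Finite 0) with (Rbar_mult M (Rbar_inv p_infty)) by (simpl; f_equal; ring).
      apply is_lim_seq_scal_l, is_lim_seq_inv; [|discriminate].
      apply (is_lim_seq_incr_1 INR). apply is_lim_seq_INR. }
    apply (is_lim_seq_le_le (fun n => - (M * / INR (S n))) _ (fun n => M * / INR (S n))).
    + intros n. rewrite psum_Sof.
      assert (Hs := Sof_bound x a b y M (fun t => conj (Hb0 t) (proj2 (Hb t))) Hy (S n)).
      apply Rabs_le_between in Hs.
      assert (0 < INR (S n)) by (apply lt_0_INR; lia).
      unfold Rdiv. assert (0 < / INR (S n)) by (apply Rinv_0_lt_compat; lra).
      split; nra.
    + replace (Finite 0) with (Rbar_opp 0) by (simpl; f_equal; ring).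
      apply (proj1 (is_lim_seq_opp _ _)). exact Hlim.
    + exact Hlim.
Qed.
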